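(* Fix any total budget $\mathrm{TB}\in\mathbb N_0$ and game forms $G,H$. Suppose $G$ has an inverse $G'$, i.e. $G+G'=0$. Then $G+H=G$ implies $H=0$.
   Context: Game forms are defined recursively: $G=\{G^{\mathcal L}\mid G^{\mathcal R}\}$ with finite sets of Left and Right options, and finite birthday. $0=\{\varnothing\mid\varnothing\}$. The budget set for total budget $\mathrm{TB}$ is $\mathcal B=\{0,\dots,\mathrm{TB},\hat 0,\dots,\widehat{\mathrm{TB}}\}$: state $p$ (resp. $\hat p$) means Left holds $p$ dollars and Right holds $\mathrm{TB}-p$, and Right (resp. Left) holds the tie-breaking marker. Play of $(G,\tilde p)$: at every position (terminal ones included) both players bid simultaneously, Left $\ell\in\{0,\dots,p\}$, Right $r\in\{0,\dots,\mathrm{TB}-p\}$. If Left holds the marker (state $\hat p$): if $\ell>r$ Left moves to $(G^L,\widehat{p-\ell})$, or, including the marker (allowed when $\ell\ge r$), to $(G^L,p-\ell)$; if $\ell=r$ Left wins, the marker passes to Right, play continues at $(G^L,p-\ell)$; if $\ell<r$ Right moves to $(G^R,\widehat{p+r})$. Symmetrically when Right holds the marker (state $p$): if $r>\ell$ Right moves to $(G^R,p+r)$ or, including the marker, to $(G^R,\widehat{p+r})$; if $r=\ell$ Right wins, the marker passes to Left, play continues at $(G^R,\widehat{p+r})$; if $r<\ell$ Left moves to $(G^L,p-\ell)$. A player who wins a bid but has no option loses. $o(G,\tilde p)\in\{\mathrm L,\mathrm R\}$ is the winner under optimal play; $\mathrm L>\mathrm R$. Disjunctive sum $G+H=\{G^{\mathcal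 L}+H,G+H^{\mathcal L}\mid G^{\mathcal R}+H,G+H^{\mathcal R}\}$. $G\ge H$ means $o(G+X,\tilde p)\ge o(H+X,\tilde p)$ for all game forms $X$ and all $\tilde p\in\mathcal B$; $G=H$ means $G\ge H$ and $H\ge G$. *)

(* Defs.v *)
From Stdlib Require Import List Arith Bool.
Import ListNotations.

(* Game forms: finite lists of Left and Right options (finite birthday by
   construction).  The outcome depends only on the sets of options. *)
Inductive game : Type :=
  | Game : list game -> list game -> game.

Definition gzero : game := Game [] [].

Fixpoint gadd (G : game) : game -> game :=
  match G with
  | Game GL GR =>
      fix gaddG (H : game) : game :=
        match H with
        | Game HL HR =>
            Game (map (fun g => gadd g H) GL ++ map gaddG HL)
                 (map (fun g => gadd g H) GR ++ map gaddG HR)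
        end
  end.

(* Budget states: a pair (p, hat) with p <= TB.  Left holds p dollars and
   Right holds TB - p.  hat = true is the state \hat p (Left holds the
   tie-breaking marker); hat = false is the state p (Right holds it). *)
Fixpoint lwin (TB : nat) (G : game) (p : nat) (hat : bool) {struct G} : bool :=
  match G with
  | Game Ls Rs =>
      let LL := fun (q : nat) (h : bool) =>
                  existsb (fun GL => lwin TB GL q h) Ls in
      let RR := fun (q : nat) (h : bool) =>
                  forallb (fun GR => lwin TB GR q h) Rs in
      existsb (fun l =>
        forallb (fun r =>
          if hat then
            match Nat.compare l r with
            | Gt => LL (p - l) true || LL (p - l) false
            | Eq => LL (p - l) false
            | Lt => RR (p + r) true
            end
          else
            match Nat.compare r l with
            | Gt => RR (p + r) false && RR (p + r) true
            | Eq => RR (p + r) true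
            | Lt => LL (p - l) false
            end)
          (seq 0 (TB - p + 1)))
        (seq 0 (p + 1))
  end.

Inductive outcome : Type := OL | OR.

Definition outcome_le (a b : outcome) : Prop :=
  match a, b with
  | OL, OR => False
  | _, _ => True
  end.

Definition o (TB : nat) (G : game) (p : nat) (hat : bool) : outcome :=
  if lwin TB G p hat then OL else OR.

Definition game_ge (TB : nat) (G H : game) : Prop :=
  forall (X : game) (p : nat) (hat : bool), p <= TB ->
    outcome_le (o TB (gadd H X) p hat) (o TB (gadd G X) p hat).

Definition game_eq (TB : nat) (G H : game) : Prop :=
  game_ge TB G H /\ game_ge TB H G.

(* Main.v *)
Require Import Defs.
From Stdlib Require Import List Arith Bool Lia.
From Stdlib Require Import FunctionalExtensionality.
Import ListNotations.

Fixpoint game_ind' (P : game -> Prop)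
  (f : forall L R, Forall P L -> Forall P R -> P (Game L R)) (g : game) : P g :=
  match g with
  | Game L R => f L R
      ((fix F l := match l return Forall P l with
                   | [] => Forall_nil _
                   | x :: t => Forall_cons x (game_ind' P f x) (F t) end) L)
      ((fix F l := match l return Forall P l with
                   | [] => Forall_nil _
                   | x :: t => Forall_cons x (game_ind' P f x) (F t) end) R)
  end.

Inductive sim : game -> game -> Prop :=
| sim_intro L1 R1 L2 R2 :
   (forall a, In a L1 -> exists b, In b L2 /\ sim a b) ->
   (forall b, In b L2 -> exists a, In a L1 /\ sim a b) ->
   (forall a, In a R1 -> exists b, In b R2 /\ sim a b) ->
   (forall b, In b R2 -> exists a, In a R1 /\ sim a b) ->
   sim (Game L1 R1) (Game L2 R2).

Lemma ex_eq (f g : game -> bool) L1 L2 (R : game -> game -> Prop) :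
  (forall a, In a L1 -> exists b, In b L2 /\ R a b) ->
  (forall b, In b L2 -> exists a, In a L1 /\ R a b) ->
  (forall a b, In a L1 -> R a b -> f a = g b) ->
  existsb f L1 = existsb g L2.
Proof.
  intros H1 H2 H3.
  destruct (existsb f L1) eqn:E1; destruct (existsb g L2) eqn:E2; auto.
  - apply existsb_exists in E1 as [a [Ha Hfa]].
    destruct (H1 a Ha) as [b [Hb Rab]].
    assert (existsb g L2 = true) by (apply existsb_exists; exists b; split; auto;
      rewrite <- (H3 a b); auto). congruence.
  - apply existsb_exists in E2 as [b [Hb Hgb]].
    destruct (H2 b Hb) as [a [Ha Rab]].
    assert (existsb f L1 = true) by (apply existsb_exists; exists a; split; auto;
      rewrite (H3 a b); auto). congruence.
Qed.

Lemma fa_eq (f g : game -> bool) L1 L2 (R : game -> game -> Prop) :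
  (forall a, In a L1 -> exists b, In b L2 /\ R a b) ->
  (forall b, In b L2 -> exists a, In a L1 /\ R a b) ->
  (forall a b, In a L1 -> R a b -> f a = g b) ->
  forallb f L1 = forallb g L2.
Proof.
  intros H1 H2 H3.
  destruct (forallb f L1) eqn:E1; destruct (forallb g L2) eqn:E2; auto.
  - rewrite forallb_forall in E1.
    assert (forallb g L2 = true); [|congruence].
    apply forallb_forall. intros b Hb. destruct (H2 b Hb) as [a [Ha Rab]].
    rewrite <- (H3 a b); auto.
  - rewrite forallb_forall in E2.
    assert (forallb f L1 = true); [|congruence].
    apply forallb_forall. intros a Ha. destruct (H1 a Ha) as [b [Hb Rab]].
    rewrite (H3 a b); auto.
Qed.

Definition body (TB : nat) (LL RR : nat -> bool -> bool) (p : nat) (hat : bool) : bool :=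
      existsb (fun l =>
        forallb (fun r =>
          if hat then
            match Nat.compare l r with
            | Gt => LL (p - l) true || LL (p - l) false
            | Eq => LL (p - l) false
            | Lt => RR (p + r) true
            end
          else
            match Nat.compare r l with
            | Gt => RR (p + r) false && RR (p + r) true
            | Eq => RR (p + r) true
            | Lt => LL (p - l) false
            end)
          (seq 0 (TB - p + 1)))
        (seq 0 (p + 1)).

Lemma lwin_unfold TB Ls Rs p hat :
  lwin TB (Game Ls Rs) p hat =
  body TB (fun q h => existsb (fun GL => lwin TB GL q h) Ls)
          (fun q h => forallb (fun GR => lwin TB GR q h) Rs) p hat.
Proof. reflexivity. Qed.

Lemma lwin_sim TB G : forall G', sim G G' -> forall p h, lwin TB G p h = lwin TB G' p h.
Proof.
  induction G as [L R IL IR] using game_ind'.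
  intros G' Hs. inversion Hs; subst. intros p h.
  rewrite !lwin_unfold. f_equal.
  - apply functional_extensionality; intro q; apply functional_extensionality; intro hh.
    apply (ex_eq _ _ _ _ sim); auto.
    intros a b Ha Hab. rewrite Forall_forall in IL. apply IL; auto.
  - apply functional_extensionality; intro q; apply functional_extensionality; intro hh.
    apply (fa_eq _ _ _ _ sim); auto.
    intros a b Ha Hab. rewrite Forall_forall in IR. apply IR; auto.
Qed.

Lemma gadd_eq GL GR HL HR :
  gadd (Game GL GR) (Game HL HR) =
  Game (map (fun g => gadd g (Game HL HR)) GL ++ map (gadd (Game GL GR)) HL)
       (map (fun g => gadd g (Game HL HR)) GR ++ map (gadd (Game GL GR)) HR).
Proof. reflexivity. Qed.

Lemma sim_refl G : sim G G.
Proof.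
  induction G as [L R IL IR] using game_ind'.
  rewrite Forall_forall in IL, IR.
  constructor; intros a Ha; exists a; auto.
Qed.

Lemma gzero_sim Y : sim (gadd gzero Y) Y.
Proof.
  induction Y as [L R IL IR] using game_ind'.
  rewrite Forall_forall in IL, IR.
  unfold gzero. rewrite gadd_eq. simpl.
  constructor.
  - intros a Ha. apply in_map_iff in Ha as [x [<- Hx]]. exists x; auto.
  - intros b Hb. exists (gadd gzero b). split; [apply in_map; auto| auto].
  - intros a Ha. apply in_map_iff in Ha as [x [<- Hx]]. exists x; auto.
  - intros b Hb. exists (gadd gzero b). split; [apply in_map; auto| auto].
Qed.

Definition lo (G : game) := match G with Game L _ => L end.
Definition ro (G : game) := match G with Game _ R => R end.

Lemma gadd_lo G H : lo (gadd G H) = map (fun g => gadd g H) (lo G) ++ map (gadd G) (lo H).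
Proof. destruct G, H; reflexivity. Qed.
Lemma gadd_ro G H : ro (gadd G H) = map (fun g => gadd g H) (ro G) ++ map (gadd G) (ro H).
Proof. destruct G, H; reflexivity. Qed.

Lemma game_ind2 (P : game -> Prop) :
  (forall G, (forall x, In x (lo G) -> P x) -> (forall x, In x (ro G) -> P x) -> P G) ->
  forall G, P G.
Proof.
  intros f G. induction G as [L R IL IR] using game_ind'.
  apply f; simpl; apply Forall_forall; auto.
Qed.

Lemma sim_intro2 G G' :
   (forall a, In a (lo G) -> exists b, In b (lo G') /\ sim a b) ->
   (forall b, In b (lo G') -> exists a, In a (lo G) /\ sim a b) ->
   (forall a, In a (ro G) -> exists b, In b (ro G') /\ sim a b) ->
   (forall b, In b (ro G') -> exists a, In a (ro G) /\ sim a b) ->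
   sim G G'.
Proof. destruct G, G'; simpl; constructor; auto. Qed.

Lemma sim_lo G G' : sim G G' ->
   (forall a, In a (lo G) -> exists b, In b (lo G') /\ sim a b) /\
   (forall b, In b (lo G') -> exists a, In a (lo G) /\ sim a b) /\
   (forall a, In a (ro G) -> exists b, In b (ro G') /\ sim a b) /\
   (forall b, In b (ro G') -> exists a, In a (ro G) /\ sim a b).
Proof. intro H; destruct H; simpl; auto. Qed.

Ltac pickL :=
  intros a Ha; repeat rewrite in_app_iff in Ha;
  repeat destruct Ha as [Ha|Ha];
  apply in_map_iff in Ha as [x [<- Hx]];
  eexists; (split;
  [ repeat rewrite in_app_iff; repeat (left + right); apply in_map_iff; eexists; (split; [reflexivity | exact Hx])
  | eauto ]).

Ltac pickR :=
  intros b Hb; repeat rewrite in_app_iff in Hb;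
  repeat destruct Hb as [Hb|Hb];
  apply in_map_iff in Hb as [x [<- Hx]];
  eexists; (split;
  [ repeat rewrite in_app_iff; repeat (left + right); apply in_map_iff; eexists; (split; [reflexivity | exact Hx])
  | eauto ]).

Lemma sim_comm G : forall H, sim (gadd G H) (gadd H G).
Proof.
  induction G as [G IL IR] using game_ind2. intro H.
  induction H as [H JL JR] using game_ind2.
  apply sim_intro2; (try rewrite !gadd_lo); (try rewrite !gadd_ro). 1,3: pickL. all: pickR.
Qed.

Lemma sim_assoc G : forall H K, sim (gadd (gadd G H) K) (gadd G (gadd H K)).
Proof.
  induction G as [G IL IR] using game_ind2. intro H.
  induction H as [H JL JR] using game_ind2. intro K.
  induction K as [K KL KR] using game_ind2.
  apply sim_intro2; (try rewrite !gadd_lo); (try rewrite !gadd_ro);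
    rewrite ?map_app, ?map_map. 1,3: pickL. all: pickR.
Qed.

Lemma sim_compat G : forall G' H H', sim G G' -> sim H H' -> sim (gadd G H) (gadd G' H').
Proof.
  induction G as [G IL IR] using game_ind2. intros G' H.
  induction H as [H JL JR] using game_ind2. intros H' sG sH.
  pose proof (sim_lo _ _ sG) as [g1 [g2 [g3 g4]]].
  pose proof (sim_lo _ _ sH) as [h1 [h2 [h3 h4]]].
  apply sim_intro2; (try rewrite !gadd_lo); (try rewrite !gadd_ro).
  all: intros a Ha; repeat rewrite in_app_iff in Ha;
    destruct Ha as [Ha|Ha]; apply in_map_iff in Ha as [x [<- Hx]].
  all: first [ destruct (g1 x Hx) as [y [Hy Sy]] | destruct (g2 x Hx) as [y [Hy Sy]]
             | destruct (g3 x Hx) as [y [Hy Sy]] | destruct (g4 x Hx) as [y [Hy Sy]]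
             | destruct (h1 x Hx) as [y [Hy Sy]] | destruct (h2 x Hx) as [y [Hy Sy]]
             | destruct (h3 x Hx) as [y [Hy Sy]] | destruct (h4 x Hx) as [y [Hy Sy]] ].
  all: eexists; (split; [ rewrite in_app_iff; (left + right); apply in_map_iff; exists y; (split; [reflexivity | exact Hy]) | eauto ]).
Qed.

Lemma lw TB A B p h : sim A B -> lwin TB A p h = lwin TB B p h.
Proof. intro s; apply lwin_sim; auto. Qed.

Lemma eq_lwin TB A B : game_eq TB A B ->
  forall X p h, p <= TB -> lwin TB (gadd A X) p h = lwin TB (gadd B X) p h.
Proof.
  intros [H1 H2] X p h Hp. specialize (H1 X p h Hp). specialize (H2 X p h Hp).
  unfold outcome_le, o in *.
  destruct (lwin TB (gadd A X) p h), (lwin TB (gadd B X) p h); tauto.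
Qed.

Theorem mainTheorem10 (TB : nat) (G H : game) :
  (exists G' : game, game_eq TB (gadd G G') gzero) ->
  game_eq TB (gadd G H) G ->
  game_eq TB H gzero.
Proof.
  intros [G' E1] E2.
  assert (K : forall X p h, p <= TB -> lwin TB (gadd H X) p h = lwin TB (gadd gzero X) p h).
  { intros X p h Hp.
    transitivity (lwin TB (gadd gzero (gadd H X)) p h).
    { symmetry; apply lw, gzero_sim. }
    transitivity (lwin TB (gadd (gadd G G') (gadd H X)) p h).
    { symmetry; apply (eq_lwin _ _ _ E1); auto. }
    transitivity (lwin TB (gadd (gadd (gadd G G') H) X) p h).
    { symmetry; apply lw, sim_assoc. }
    transitivity (lwin TB (gadd (gadd G (gadd G' H)) X) p h).
    { apply lw, sim_compat; [apply sim_assoc | apply sim_refl]. }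
    transitivity (lwin TB (gadd (gadd G (gadd H G')) X) p h).
    { apply lw, sim_compat; [apply sim_compat; [apply sim_refl | apply sim_comm] | apply sim_refl]. }
    transitivity (lwin TB (gadd (gadd (gadd G H) G') X) p h).
    { symmetry; apply lw, sim_compat; [apply sim_assoc | apply sim_refl]. }
    transitivity (lwin TB (gadd (gadd G H) (gadd G' X)) p h).
    { apply lw, sim_assoc. }
    transitivity (lwin TB (gadd G (gadd G' X)) p h).
    { apply (eq_lwin _ _ _ E2); auto. }
    transitivity (lwin TB (gadd (gadd G G') X) p h).
    { symmetry; apply lw, sim_assoc. }
    apply (eq_lwin _ _ _ E1); auto. }
  split; intros X p h Hp; unfold outcome_le, o; rewrite (K X p h Hp);
    destruct (lwin TB (gadd gzero X) p h); auto.
Qed.
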